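(* Let $A = \langle Q,\Sigma,F,\delta\rangle$ be a tree automaton and $R$ a left-linear term rewriting system over $\Sigma$. Suppose that for every rule $\ell \to r \in R$, every assignment $\alpha : \mathcal{X} \to Q$ and every $q \in Q$: if $\ell\alpha \rightsquigarrow_A^* q$, then there exists a term $t$ with $\ell \to_R^+ t$ and $t\alpha \rightsquigarrow_A^* q$. Then $L(A)$ is weakly closed under rewriting with respect to $R$, i.e. for every $s \in L(A)$ that is not a normal form of $\to_R$ there exists $s' \in L(A)$ with $s \to_R^+ s'$.
   Context: A tree automaton $A=\langle Q,\Sigma,F,\delta\rangle$ consists of a finite set of states $Q$, a finite signature $\Sigma$, final states $F\subseteq Q$, and transition rules $f(q_1,\ldots,q_n)\rightsquigarrow q$ ($f\in\Sigma$ of arity $n$, $q_i,q\in Q$). The relation $\rightsquigarrow_A$ is the rewrite relation on terms over $\Sigma\cup Q$ (states as constants) generated by these rules in arbitrary contexts, and $\rightsquigarrow_A^*$ its reflexive-transitive closure. $L(A)$ is the set of ground terms $t$ over $\Sigma$ with $t\rightsquigarrow_A^* q$ for some $q\in F$. $\mathcal{X}$ is the set of variables; for $\alpha:\mathcal{X}\to Q$ and a term $u$, $u\alpha$ is the term over $\Sigma\cup Q$ obtained by replacing each variable $x$ by $\alpha(x)$. A term rewriting system $R$ is a set of rules $\ell\to r$ ($\ell$ not a variable, variables of $r$ among those of $\ell$); $\to_R$ is the induced one-step rewrite relation, $\to_R^+$ its transitive closure; it is left-linear if no variable occurs more than once in any left-hand side. A normal form is a term with no $\to_R$-step. *)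

(* Defs.v *)
From Stdlib Require Import List Relations FinFun.
Import ListNotations.
Set Implicit Arguments.

Section Terms.
Variable Sig : Type.

(* Terms over the signature Sig whose leaves are elements of L
   (L = variables X for ordinary terms, L = states Q for terms over Sigma u Q). *)
Inductive term (L : Type) : Type :=
| Leaf : L -> term L
| Fun : Sig -> list (term L) -> term L.

Arguments Leaf {L}.
Arguments Fun {L}.

Fixpoint wf (ar : Sig -> nat) {L} (t : term L) : Prop :=
  match t with
  | Leaf _ => True
  | Fun f ts => length ts = ar f /\
      (fix wfl (us : list (term L)) : Prop :=
         match us with [] => True | u :: us' => wf ar u /\ wfl us' end) ts
  end.

Fixpoint leaves {L} (t : term L) : list L :=
  match t with
  | Leaf x => [x]
  | Fun _ ts =>
      (fix lv (us : list (term L)) : list L :=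
         match us with [] => [] | u :: us' => leaves u ++ lv us' end) ts
  end.

Definition ground {L} (t : term L) : Prop := leaves t = [].

Fixpoint subst {L M} (s : L -> term M) (t : term L) : term M :=
  match t with
  | Leaf x => s x
  | Fun f ts => Fun f (map (subst s) ts)
  end.

Definition assign {X Q} (alpha : X -> Q) (t : term X) : term Q :=
  subst (fun x => Leaf (alpha x)) t.

Inductive rstep {X} (R : term X -> term X -> Prop) : term X -> term X -> Prop :=
| rstep_root : forall l r (sigma : X -> term X),
    R l r -> rstep R (subst sigma l) (subst sigma r)
| rstep_ctx : forall f ts1 t t' ts2,
    rstep R t t' -> rstep R (Fun f (ts1 ++ t :: ts2)) (Fun f (ts1 ++ t' :: ts2)).

Definition is_TRS (ar : Sig -> nat) {X} (R : term X -> term X -> Prop) : Prop :=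
  forall l r, R l r ->
    (forall x, l <> Leaf x) /\ incl (leaves r) (leaves l) /\ wf ar l /\ wf ar r.

Definition left_linear {X} (R : term X -> term X -> Prop) : Prop :=
  forall l r, R l r -> NoDup (leaves l).

Definition normal_form {X} (R : term X -> term X -> Prop) (t : term X) : Prop :=
  ~ exists u, rstep R t u.

Record tree_automaton (ar : Sig -> nat) : Type := TA {
  ta_Q : Type;
  ta_Q_finite : Finite ta_Q;
  ta_final : ta_Q -> Prop;
  ta_delta : list (Sig * list ta_Q * ta_Q);
  ta_delta_ar : forall f qs q, In (f, qs, q) ta_delta -> length qs = ar f
}.

Inductive tastep (ar : Sig -> nat) (A : tree_automaton ar)
  : term (ta_Q A) -> term (ta_Q A) -> Prop :=
| tastep_root : forall f qs q, In (f, qs, q) (ta_delta A) ->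
    tastep A (Fun f (map Leaf qs)) (Leaf q)
| tastep_ctx : forall f ts1 t t' ts2,
    tastep A t t' -> tastep A (Fun f (ts1 ++ t :: ts2)) (Fun f (ts1 ++ t' :: ts2)).

Definition tareach (ar : Sig -> nat) (A : tree_automaton ar) :=
  clos_refl_trans _ (tastep A).

(* L(A): ground terms over Sig (written as terms over X without variables)
   that the automaton reduces to a final state. For a ground term, t alpha
   does not depend on alpha. *)
Definition lang (ar : Sig -> nat) (A : tree_automaton ar) {X} (t : term X) : Prop :=
  ground t /\ wf ar t /\
  exists (alpha : X -> ta_Q A) q, ta_final A q /\ tareach A (assign alpha t) (Leaf q).

End Terms.

Arguments Leaf {Sig L}.
Arguments Fun {Sig L}.

(* Main.v *)
Require Import Defs.
From Stdlib Require Import List Relations FinFun.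
From Stdlib Require Import ClassicalEpsilon Classical.
Import ListNotations.

Section TI.
Variable Sig : Type.
Variable L : Type.
Variable P : term Sig L -> Prop.
Hypothesis HL : forall x, P (Leaf x).
Hypothesis HF : forall f ts, Forall P ts -> P (Fun f ts).
Fixpoint term_ind' (t : term Sig L) : P t :=
  match t with
  | Leaf x => HL x
  | Fun f ts => HF f ts
      ((fix go (us : list (term Sig L)) : Forall P us :=
         match us with
         | [] => Forall_nil _
         | u :: us' => Forall_cons _ (term_ind' u) (go us')
         end) ts)
  end.
End TI.

Section Aux.
Variable Sig : Type.

Lemma leaves_Fun {L} f (ts : list (term Sig L)) :
  leaves (Fun f ts) = flat_map (@leaves Sig _) ts.
Proof. induction ts; simpl; [reflexivity|]. f_equal; exact IHts. Qed.

Lemma wf_Fun ar {L} f (ts : list (term Sig L)) :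
  wf ar (Fun f ts) <-> length ts = ar f /\ Forall (wf ar) ts.
Proof.
  simpl. split; intros [H1 H2]; split; auto; clear H1.
  - induction ts; [constructor|]. destruct H2. constructor; auto.
  - induction ts; simpl; auto. inversion H2; subst; split; auto.
    apply IHts; auto.
Qed.

Lemma subst_subst {L M N} (s : M -> term Sig N) (r : L -> term Sig M) t :
  subst s (subst r t) = subst (fun x => subst s (r x)) t.
Proof.
  induction t using term_ind'; simpl; auto.
  f_equal. rewrite map_map. induction H; simpl; auto. f_equal; auto.
Qed.

Lemma subst_ext {L M} (s r : L -> term Sig M) t :
  (forall x, In x (leaves t) -> s x = r x) -> subst s t = subst r t.
Proof.
  induction t using term_ind'; intros He; simpl.
  - apply He; simpl; auto.
  - rewrite leaves_Fun in He. f_equal. induction H; simpl; auto.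
    simpl in He. f_equal.
    + apply H. intros; apply He, in_or_app; auto.
    + apply IHForall. intros; apply He, in_or_app; auto.
Qed.

Lemma leaves_subst {L M} (s : L -> term Sig M) t :
  leaves (subst s t) = flat_map (fun x => leaves (s x)) (leaves t).
Proof.
  induction t using term_ind'.
  - simpl; rewrite app_nil_r; auto.
  - change (subst s (Fun f ts)) with (Fun f (map (subst s) ts)).
    rewrite !leaves_Fun. induction H; simpl; auto.
    rewrite flat_map_app, H, IHForall. auto.
Qed.

Lemma wf_subst1 ar {L M} (s : L -> term Sig M) t :
  wf ar (subst s t) -> forall x, In x (leaves t) -> wf ar (s x).
Proof.
  induction t using term_ind'; intros Hw y Hy; simpl.
  - destruct Hy as [<-|[]]; auto.
  - rewrite leaves_Fun in Hy.
    change (wf ar (Fun f (map (subst s) ts))) in Hw.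
    apply wf_Fun in Hw. destruct Hw as [_ Hw].
    induction H; simpl in *; [contradiction|]. inversion Hw; subst.
    apply in_app_or in Hy; destruct Hy; eauto.
Qed.

Lemma wf_subst2 ar {L M} (s : L -> term Sig M) t :
  wf ar t -> (forall x, In x (leaves t) -> wf ar (s x)) -> wf ar (subst s t).
Proof.
  induction t using term_ind'; intros Hw Hs; simpl.
  - apply Hs; simpl; auto.
  - change (wf ar (Fun f (map (subst s) ts))).
    apply wf_Fun in Hw. apply wf_Fun. destruct Hw as [Hl Hw].
    rewrite length_map; split; auto.
    rewrite leaves_Fun in Hs. clear Hl.
    induction H; simpl in *; constructor; inversion Hw; subst.
    + apply H; auto. intros; apply Hs, in_or_app; auto.
    + apply IHForall; auto. intros; apply Hs, in_or_app; auto.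
Qed.

Section R.
Variable ar : Sig -> nat.
Variable X : Type.
Variable R : term Sig X -> term Sig X -> Prop.

Lemma rstep_subst (s : X -> term Sig X) a b :
  rstep R a b -> rstep R (subst s a) (subst s b).
Proof.
  induction 1.
  - rewrite !subst_subst. constructor; auto.
  - simpl. rewrite !map_app. simpl. constructor; auto.
Qed.

Lemma ct_subst (s : X -> term Sig X) a b :
  clos_trans _ (rstep R) a b -> clos_trans _ (rstep R) (subst s a) (subst s b).
Proof.
  induction 1. apply t_step, rstep_subst; auto. eapply t_trans; eauto.
Qed.

Lemma ct_ctx f ts1 t t' ts2 :
  clos_trans _ (rstep R) t t' ->
  clos_trans _ (rstep R) (Fun f (ts1 ++ t :: ts2)) (Fun f (ts1 ++ t' :: ts2)).
Proof.
  induction 1. apply t_step; constructor; auto. eapply t_trans; eauto.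
Qed.

Hypothesis HT : is_TRS ar R.

Lemma rstep_leaves a b : rstep R a b -> incl (leaves b) (leaves a).
Proof.
  induction 1.
  - rewrite !leaves_subst. destruct (HT _ _ H) as [_ [Hi _]].
    intros x Hx. apply in_flat_map in Hx. destruct Hx as [y [Hy Hx]].
    apply in_flat_map. eauto.
  - rewrite !leaves_Fun, !flat_map_app. simpl.
    intros x Hx. apply in_app_or in Hx. apply in_or_app.
    destruct Hx as [Hx|Hx]; auto. right.
    apply in_app_or in Hx. apply in_or_app. destruct Hx; auto.
Qed.

Lemma ct_leaves a b : clos_trans _ (rstep R) a b -> incl (leaves b) (leaves a).
Proof.
  induction 1. apply rstep_leaves; auto. eapply incl_tran; eauto.
Qed.

Lemma rstep_wf a b : rstep R a b -> wf ar a -> wf ar b.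
Proof.
  induction 1; intros Hw.
  - destruct (HT _ _ H) as [_ [Hi [_ Hr]]].
    apply wf_subst2; auto. intros x Hx. eapply wf_subst1; eauto.
  - apply wf_Fun in Hw. apply wf_Fun. destruct Hw as [Hl Hw].
    rewrite length_app in *; simpl in *. split; auto.
    apply Forall_app in Hw. destruct Hw as [Hw1 Hw2]. inversion Hw2; subst.
    apply Forall_app; split; auto.
Qed.

Lemma ct_wf a b : clos_trans _ (rstep R) a b -> wf ar a -> wf ar b.
Proof. induction 1; eauto using rstep_wf. Qed.
End R.

Section A.
Variable ar : Sig -> nat.
Variable A : tree_automaton ar.
Notation Q := (ta_Q A).

Inductive acc : term Sig Q -> Q -> Prop :=
| acc_leaf q : acc (Leaf q) q
| acc_fun f ts qs q : In (f, qs, q) (ta_delta A) -> Forall2 acc ts qs -> acc (Fun f ts) q.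

Lemma acc_back t t' : tastep A t t' -> forall q, acc t' q -> acc t q.
Proof.
  induction 1; intros q0 Ha.
  - inversion Ha; subst. econstructor; eauto.
    clear H. induction qs; simpl; constructor; auto. constructor.
  - inversion Ha as [|f0 ts0 qs0 q1 Hin Hf]; subst.
    apply Forall2_app_inv_l in Hf. destruct Hf as [l1 [l2 [Hl1 [Hl2 ->]]]].
    inversion Hl2; subst. econstructor; eauto.
    apply Forall2_app; auto.
Qed.

Lemma reach_acc t q : tareach A t (Leaf q) -> acc t q.
Proof.
  unfold tareach. intros H. apply clos_rt_rt1n in H.
  remember (Leaf q) as z. revert Heqz. induction H; intros ->.
  - constructor.
  - eapply acc_back; eauto.
Qed.

Lemma reach_ctx f pre t u ts :
  tareach A t u -> tareach A (Fun f (pre ++ t :: ts)) (Fun f (pre ++ u :: ts)).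
Proof.
  induction 1.
  - apply rt_step. constructor; auto.
  - apply rt_refl.
  - eapply rt_trans; eauto.
Qed.

Lemma reach_args f ts us :
  Forall2 (tareach A) ts us -> forall pre,
  tareach A (Fun f (pre ++ ts)) (Fun f (pre ++ us)).
Proof.
  induction 1; intros pre. apply rt_refl.
  eapply rt_trans. apply reach_ctx; eauto.
  replace (pre ++ y :: l) with ((pre ++ [y]) ++ l) by (rewrite <- app_assoc; auto).
  replace (pre ++ y :: l') with ((pre ++ [y]) ++ l') by (rewrite <- app_assoc; auto).
  apply IHForall2.
Qed.

Lemma acc_reach t : forall q, acc t q -> tareach A t (Leaf q).
Proof.
  induction t using term_ind'; intros q Ha; inversion Ha; subst.
  - apply rt_refl.
  - eapply rt_trans.
    + apply (reach_args f ts (map Leaf qs)) with (pre := []).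
      clear H2 Ha. revert qs H4. induction H; intros qs H4; inversion H4; subst;
      simpl; constructor; auto.
    + apply rt_step. constructor. auto.
Qed.

Variable X : Type.

Lemma lin (tau : X -> term Sig Q) : forall l q, acc (subst tau l) q ->
  NoDup (leaves l) -> forall a0 : X -> Q, exists a,
  (forall x, In x (leaves l) -> acc (tau x) (a x)) /\
  (forall x, ~ In x (leaves l) -> a x = a0 x) /\ acc (assign a l) q.
Proof.
  intros l; induction l using term_ind'; intros q Ha Hn a0.
  - exists (fun y => if excluded_middle_informative (y = x) then q else a0 y).
    simpl in *. split; [|split].
    + intros y [<-|[]]. destruct excluded_middle_informative; congruence.
    + intros y Hy. destruct excluded_middle_informative; auto. subst; tauto.
    + unfold assign; simpl. destruct excluded_middle_informative; [|congruence].
      constructor.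
  - inversion Ha as [|f0 ts0 qs0 q0 Hin Hf]; subst. rewrite leaves_Fun in *.
    assert (G : forall qs, Forall2 acc (map (subst tau) ts) qs ->
      NoDup (flat_map (@leaves Sig _) ts) -> forall a0 : X -> Q, exists a,
      (forall x, In x (flat_map (@leaves Sig _) ts) -> acc (tau x) (a x)) /\
      (forall x, ~ In x (flat_map (@leaves Sig _) ts) -> a x = a0 x) /\
      Forall2 acc (map (assign a) ts) qs).
    { clear -H. induction H as [|t ts Ht Hts IH]; intros qs Hf Hn a0.
      - inversion Hf; subst. exists a0; simpl; split; [intros ? []|split; [auto|constructor]].
      - inversion Hf as [|? q1 ? qs1 Hh Ht']; subst. simpl in Hn.
        assert (Dis : forall x, In x (leaves t) -> ~ In x (flat_map (@leaves Sig _) ts)).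
        { clear -Hn. induction (leaves t); simpl; intros x Hx; [contradiction|].
          inversion Hn as [|? ? Hni Hnd]; subst. destruct Hx as [<-|Hx].
          - intros C; apply Hni, in_or_app; auto.
          - apply IHl; auto. }
        destruct (Ht _ Hh (NoDup_app_remove_r _ _ Hn) a0) as [a1 [A1 [B1 C1]]].
        destruct (IH _ Ht' (NoDup_app_remove_l _ _ Hn) a1) as [a2 [A2 [B2 C2]]].
        exists a2. simpl. split; [|split].
        + intros x Hx. apply in_app_or in Hx. destruct Hx; auto.
          rewrite B2; auto.
        + intros x Hx. rewrite B2, B1; auto; intro; apply Hx, in_or_app; auto.
        + constructor; auto. unfold assign in *.
          erewrite subst_ext; [apply C1|]. intros x Hx. simpl. rewrite B2; auto. }
    destruct (G _ Hf Hn a0) as [a [Ha1 [Ha2 Ha3]]].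
    exists a; repeat split; auto. econstructor; eauto.
Qed.

Lemma unlin (tau : X -> term Sig Q) (a : X -> Q) : forall t q,
  acc (assign a t) q -> (forall x, In x (leaves t) -> acc (tau x) (a x)) ->
  acc (subst tau t) q.
Proof.
  intros t; induction t using term_ind'; intros q Ha Hx.
  - simpl in *. inversion Ha; subst. apply Hx; auto.
  - inversion Ha as [|f0 ts0 qs0 q0 Hin Hf]; subst. econstructor; eauto. rewrite leaves_Fun in Hx.
    clear Hin Ha. revert qs0 Hf. induction H; intros qs Hf; inversion Hf; subst;
      simpl; constructor.
    + apply H; auto. intros; apply Hx; simpl; apply in_or_app; auto.
    + apply IHForall; auto. intros; apply Hx; simpl; apply in_or_app; auto.
Qed.

End A.
End Aux.
Arguments acc {Sig ar} A _ _.
Arguments lin {Sig ar} A {X} tau l q _ _ a0.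
Arguments unlin {Sig ar} A {X} tau a t q _ _.
Arguments acc_reach {Sig ar} A t q _.
Arguments reach_acc {Sig ar} A t q _.

Theorem mainTheorem3 (Sig : Type) (ar : Sig -> nat) (Sig_fin : Finite Sig)
  (X : Type) (A : tree_automaton ar) (R : term Sig X -> term Sig X -> Prop) :
  is_TRS ar R ->
  left_linear R ->
  (forall l r, R l r ->
     forall (alpha : X -> ta_Q A) (q : ta_Q A),
       tareach A (assign alpha l) (Leaf q) ->
       exists t, clos_trans _ (rstep R) l t /\ tareach A (assign alpha t) (Leaf q)) ->
  forall s, lang A s -> ~ normal_form R s ->
  exists s', lang A s' /\ clos_trans _ (rstep R) s s'.
Proof.
  intros HT HL HC s [Hg [Hw [alpha [q [Hf Hr]]]]] Hnf.
  unfold normal_form in Hnf. apply NNPP in Hnf. destruct Hnf as [u Hu].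
  assert (M : forall s u, rstep R s u -> forall q, acc A (assign alpha s) q ->
     exists s', clos_trans _ (rstep R) s s' /\ acc A (assign alpha s') q).
  { clear - HT HL HC. induction 1 as [l r sg Hlr|f ts1 t t' ts2 Hst IH]; intros q Ha.
    - unfold assign in Ha. rewrite subst_subst in Ha.
      destruct (lin A _ _ _ Ha (HL _ _ Hlr) alpha) as [a [Ha1 [_ Ha2]]].
      destruct (HC _ _ Hlr a q (acc_reach _ _ _ Ha2)) as [t [Ht1 Ht2]].
      exists (subst sg t). split. apply ct_subst; auto.
      unfold assign. rewrite subst_subst.
      apply (unlin A _ a); auto using reach_acc.
      intros x Hx. apply Ha1. eapply ct_leaves; eauto.
    - unfold assign in Ha; simpl in Ha. rewrite map_app in Ha; simpl in Ha.
      inversion Ha as [|f0 ts0 qs0 q0 Hin Hf]; subst.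
      apply Forall2_app_inv_l in Hf. destruct Hf as [l1 [l2 [Hl1 [Hl2 ->]]]].
      inversion Hl2 as [|? q1 ? qs1 Hh Ht']; subst.
      destruct (IH _ Hh) as [t'' [Ht1 Ht2]].
      exists (Fun f (ts1 ++ t'' :: ts2)). split. apply ct_ctx; auto.
      unfold assign; simpl. rewrite map_app; simpl. econstructor; eauto.
      apply Forall2_app; auto. }
  destruct (M _ _ Hu q (reach_acc _ _ _ Hr)) as [s' [Hs1 Hs2]].
  exists s'. split; auto. split; [|split].
  - unfold ground in *. apply (@ct_leaves _ _ _ _ HT) in Hs1.
    rewrite Hg in Hs1. destruct (leaves s') as [|x l]; auto.
    exfalso. apply (Hs1 x); simpl; auto.
  - eapply (@ct_wf _ _ _ _ HT); eauto.
  - exists alpha, q. split; auto. apply acc_reach; auto.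
Qed.
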